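(* Let $n\le 3$. For the house allocation setting with $n$ agents and $n$ houses described in the context, an assignment rule $f$ is support efficient if and only if it is ex post efficient.
   Context: Let $N$ be a set of $n$ agents and $H$ a set of $n$ houses. A preference profile $R$ assigns to each agent $i\in N$ a strict linear order $\succ_i$ over $H$; $\mathcal{R}$ denotes the set of all such profiles. A random assignment is a bistochastic $n\times n$ matrix $(M_{i,h})_{i\in N,h\in H}$ (nonnegative entries, all row and column sums equal to $1$); it is a deterministic assignment if all entries are in $\{0,1\}$. An assignment rule $f$ maps each $R\in\mathcal{R}$ to a random assignment $f(R)$; $f(R,i,h)$ is the probability that agent $i$ receives house $h$. A deterministic assignment $M$ is (Pareto) efficient at $R$ if there is no deterministic assignment $M'\ne M$ such that for all $i\in N$ and $h\neq h'$, $M'_{i,h'}=M_{i,h}=1$ implies $h'\succ_i h$. A rule $f$ is ex post efficient if for every $R$, $f(R)$ is a convex combination of deterministic assignments that are efficient at $R$. For a priority order $\pi$ of the agents, the serial dictatorship $SD_\pi$ lets agents in order $\pi$ successively pick their most preferred remaining house; random serial dictatorship is $RSD(R)=\frac{1}{n!}\sum_{\pi}SD_\pi(R)$, the sum over all $n!$ orders. A rule $f$ is support efficient if for all $R$, $i$, $h$: $RSD(R,i,h)=0$ implies $f(R,i,h)=0$. *)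

(* Defs.v *)
From HB Require Import structures.
From mathcomp Require Import all_boot all_order all_algebra all_fingroup.
Set Implicit Arguments. Unset Strict Implicit. Unset Printing Implicit Defensive.
Import Order.TTheory GRing.Theory Num.Theory.
Local Open Scope ring_scope.

(* Agents and houses are both 'I_n. A strict linear order over houses for
   agent i is represented by its ranking bijection: (P i) h = position of
   house h in agent i's order (0 = most preferred). *)
Definition profile (n : nat) := 'I_n -> {perm 'I_n}.

Definition prefers n (P : profile n) (i h' h : 'I_n) : bool := (P i h' < P i h)%N.

Definition bistochastic (R : numDomainType) n (M : 'M[R]_n) : Prop :=
  [/\ forall i h, 0 <= M i h,
      forall i, \sum_h M i h = 1
    & forall h, \sum_i M i h = 1].

Definition deterministic (R : numDomainType) n (M : 'M[R]_n) : Prop :=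
  bistochastic M /\ forall i h, M i h = 0 \/ M i h = 1.

Definition efficient_at (R : numDomainType) n (P : profile n) (M : 'M[R]_n) : Prop :=
  deterministic M /\
  ~ exists M' : 'M[R]_n, [/\ deterministic M', M' <> M &
      forall i h h', h != h' -> M' i h' = 1 -> M i h = 1 -> prefers P i h' h].

Definition ex_post_efficient (R : numDomainType) n (f : profile n -> 'M[R]_n) : Prop :=
  forall P, exists s : seq (R * 'M[R]_n),
    [/\ forall p, p \in s -> 0 <= p.1,
        \sum_(p <- s) p.1 = 1,
        forall p, p \in s -> efficient_at P p.2
      & f P = \sum_(p <- s) p.1 *: p.2].

Definition best_remaining n (P : profile n) (i : 'I_n) (taken : seq 'I_n) : option 'I_n :=
  ohead [seq h <- [seq (invg (P i)) k | k <- enum 'I_n] | h \notin taken].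

Fixpoint sd_run n (P : profile n) (ord : seq 'I_n) (taken : seq 'I_n)
  : seq ('I_n * 'I_n) :=
  match ord with
  | [::] => [::]
  | i :: ord' =>
    match best_remaining P i taken with
    | Some h => (i, h) :: sd_run P ord' (h :: taken)
    | None => sd_run P ord' taken
    end
  end.

Definition SD (R : numDomainType) n (pi : {perm 'I_n}) (P : profile n) : 'M[R]_n :=
  \matrix_(i, h) ((i, h) \in sd_run P [seq pi k | k <- enum 'I_n] [::])%:R.

Definition RSD (R : numFieldType) n (P : profile n) : 'M[R]_n :=
  (n`!%:R)^-1 *: \sum_(pi : {perm 'I_n}) SD R pi P.

Definition support_efficient (R : numFieldType) n (f : profile n -> 'M[R]_n) : Prop :=
  forall P i h, RSD R P i h = 0 -> f P i h = 0.

(* Main.v *)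
Require Import Defs.
From mathcomp Require Import all_boot all_order all_algebra all_fingroup.
From mathcomp Require Import zify lra.
From Stdlib Require Import Lia.
Import GRing.Theory Num.Theory.
Set Implicit Arguments. Unset Strict Implicit. Unset Printing Implicit Defensive.



Section Small.
Variable n : nat.
Hypothesis Hn : (n <= 3)%N.

Lemma four_distinct (a b c d : 'I_n) :
  a != b -> a != c -> a != d -> b != c -> b != d -> c != d -> False.
Proof.
rewrite -!val_eqE /=.
move: (ltn_ord a) (ltn_ord b) (ltn_ord c) (ltn_ord d).
move: (val a) (val b) (val c) (val d) => A B C D; lia.
Qed.

Lemma small_cycle (Q : pred 'I_n) (g : 'I_n -> 'I_n) a :
  Q a -> (forall x, Q x -> Q (g x) /\ g x != x) ->
  (exists x y, [/\ Q x, Q y, x != y, g x = y & g y = x]) \/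
  (exists x y z, [/\ Q x /\ Q y /\ Q z, [&& x != y, x != z & y != z],
                    g x = y, g y = z & g z = x]).
Proof.
move=> Qa H.
have [Q1 n1] := H _ Qa.
have [Q2 n2] := H _ Q1.
have [Q3 n3] := H _ Q2.
have [e2|ne2] := eqVneq (g (g a)) a.
  by left; exists a, (g a); split => //; rewrite eq_sym.
have [e3|ne3] := eqVneq (g (g (g a))) (g a).
  by left; exists (g a), (g (g a)); split => //; rewrite eq_sym.
have [e4|ne4] := eqVneq (g (g (g a))) a.
  right; exists a, (g a), (g (g a)); split => //.
  by rewrite eq_sym n1 eq_sym ne2 eq_sym n2.
exfalso; apply: (@four_distinct a (g a) (g (g a)) (g (g (g a)))).
- by rewrite eq_sym.
- by rewrite eq_sym.
- by rewrite eq_sym.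
- by rewrite eq_sym.
- by rewrite eq_sym.
- by rewrite eq_sym.
Qed.
End Small.

Section Comb.
Variable n : nat.
Implicit Types (P : profile n) (i x y h : 'I_n).

Lemma ohead_filter (T : eqType) (p : pred T) (s : seq T) (h : T) :
  ohead (filter p s) = Some h ->
  exists s1 s2, [/\ s = s1 ++ h :: s2, p h & all (predC p) s1].
Proof.
elim: s => [|a s IH] //=.
case: ifP => pa /=.
  by case=> <-; exists [::], s.
move=> /IH [s1 [s2 [-> ph al]]]; exists (a :: s1), s2; split => //=.
by rewrite pa al.
Qed.

Lemma rank_index P i y :
  index y [seq (invg (P i)) k | k <- enum 'I_n] = P i y.
Proof.
rewrite -{1}(permK (P i) y) index_map ?index_enum_ord //.
exact: perm_inj.
Qed.

Lemma br_spec P i t h : best_remaining P i t = Some h ->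
  h \notin t /\ forall h', h' \notin t -> ~~ prefers P i h' h.
Proof.
rewrite /best_remaining => /ohead_filter [s1 [s2 [Hs ph al]]].
split => // h' h't.
rewrite /prefers -leqNgt -!(rank_index P i) Hs.
have hs1 : h \notin s1.
  by apply/negP => /(allP al) /=; rewrite ph.
have h's1 : h' \notin s1.
  by apply/negP => /(allP al) /=; rewrite h't.
rewrite !index_cat (negbTE hs1) (negbTE h's1) /= eqxx addn0.
by apply: leq_addr.
Qed.

Lemma br_none P i t : best_remaining P i t = None -> forall h, h \in t.
Proof.
rewrite /best_remaining => H h; apply/negPn/negP => ht.
have : h \in [seq h <- [seq (invg (P i)) k | k <- enum 'I_n] | h \notin t].
  rewrite mem_filter ht /= -{1}(permK (P i) h); apply: map_f.
  by rewrite mem_enum.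
by case: [seq _ <- _ | _] H.
Qed.

Lemma br_ext P i t t' : t =i t' -> best_remaining P i t = best_remaining P i t'.
Proof.
by move=> E; rewrite /best_remaining; congr ohead; apply: eq_filter => z; rewrite E.
Qed.

Lemma sd_cat P o1 o2 t :
  sd_run P (o1 ++ o2) t =
  sd_run P o1 t ++ sd_run P o2 (rev (map snd (sd_run P o1 t)) ++ t).
Proof.
elim: o1 t => [|i o1 IH] t //=.
case: (best_remaining P i t) => [h|] //=.
by rewrite IH rev_cons cat_rcons.
Qed.

Lemma sd_split P o t r1 x h r2 :
  sd_run P o t = r1 ++ (x, h) :: r2 ->
  forall h', h' \notin t -> h' \notin map snd r1 -> ~~ prefers P x h' h.
Proof.
elim: o t r1 => [|i o IH] t r1 /=; first by case: r1.
case E: (best_remaining P i t) => [h0|]; last exact: IH.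
case: r1 => [|q r1] /=.
  case=> <- <- _ h'; have [_ ] := br_spec E; by auto.
case=> <- /IH H h' h't; rewrite in_cons negb_or => /andP [h'h0 h'r1].
by apply: H => //; rewrite in_cons negb_or h'h0.
Qed.

Lemma sd_houses_uniq P o t : uniq t -> uniq (map snd (sd_run P o t) ++ t).
Proof.
elim: o t => [|i o IH] t //= ut.
case E: (best_remaining P i t) => [h|]; last exact: IH.
have [ht _] := br_spec E.
have := IH (h :: t); rewrite /= ht ut => /(_ isT) H.
by move: H; rewrite -[h :: t]/([:: h] ++ t) uniq_catCA.
Qed.

Lemma sd_agents_subseq P o t : subseq (map fst (sd_run P o t)) o.
Proof.
elim: o t => [|i o IH] t //=.
case: (best_remaining P i t) => [h|] /=; first by rewrite eqxx.
exact: subseq_trans (IH t) (subseq_cons o i).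
Qed.


Lemma uniq_map_in_inj (T1 T2 : eqType) (f : T1 -> T2) (s : seq T1) :
  uniq (map f s) -> {in s &, injective f}.
Proof.
elim: s => [|a s IH] //= /andP [fa us] x y.
rewrite !in_cons => /orP [/eqP->|xs] /orP [/eqP->|ys] // E.
- by move: fa; rewrite E map_f.
- by move: fa; rewrite -E map_f.
- exact: IH.
Qed.

Variable P : profile n.
Variable o : seq 'I_n.
Hypothesis uo : uniq o.
Let run := sd_run P o [::].

Lemma run_houses_inj p q : p \in run -> q \in run -> p.2 = q.2 -> p = q.
Proof.
have := sd_houses_uniq P o (erefl true : uniq [::]); rewrite cats0 => U.
exact: (uniq_map_in_inj U).
Qed.

Lemma run_agents_inj p q : p \in run -> q \in run -> p.1 = q.1 -> p = q.
Proof.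
have U : uniq (map fst run) by exact: subseq_uniq (sd_agents_subseq P o [::]) uo.
exact: (uniq_map_in_inj U).
Qed.

Lemma run_key x h : (x, h) \in run ->
  forall h', h' \notin map snd (take (index (x, h) run) run) -> ~~ prefers P x h' h.
Proof.
move=> xin h' h'n.
have E : run = take (index (x, h) run) run ++ (x, h) :: drop (index (x, h) run).+1 run.
  by rewrite -{1}(cat_take_drop (index (x, h) run) run) (drop_nth (x, h)) ?index_mem ?nth_index.
exact: (sd_split E).
Qed.

Lemma run_E1 x h h' : (x, h) \in run -> prefers P x h' h ->
  exists y, (y, h') \in run /\ (index (y, h') run < index (x, h) run)%N.
Proof.
move=> xin pr; have : h' \in map snd (take (index (x, h) run) run).
  by apply/negPn/negP => /(run_key xin); rewrite pr.
case/mapP => [[y h''] yin /= ->]; exists y; split; first exact: mem_take yin.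
exact: index_ltn.
Qed.

Lemma run_before y h1 x h2 : (y, h1) \in run -> (x, h2) \in run ->
  (index (y, h1) run < index (x, h2) run)%N -> ~~ prefers P y h2 h1.
Proof.
move=> yin xin lt; apply: run_key => //; apply/negP => /mapP [q qin E].
have qrun := mem_take qin.
have qe : q = (x, h2) by apply: run_houses_inj.
move: (index_ltn qin); rewrite qe => lt2.
by move: (ltn_trans lt lt2); rewrite ltnn.
Qed.


Lemma pref_total x h h' : h != h' -> ~~ prefers P x h h' -> prefers P x h' h.
Proof.
rewrite /prefers -leqNgt leq_eqVlt => nh /orP [|//].
by rewrite (inj_eq val_inj) (inj_eq (@perm_inj _ (P x))) eq_sym (negbTE nh).
Qed.

Lemma pref_neq x h h' : prefers P x h h' -> h != h'.
Proof. by apply: contraTneq => ->; rewrite /prefers ltnn. Qed.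

Lemma two_step a b ha hb : (a, ha) \in run ->
  prefers P a hb ha -> prefers P b ha hb ->
  exists y, [/\ y != a, y != b & prefers P y hb ha].
Proof.
move=> ain pa pb.
have [y [yin lt]] := run_E1 ain pa.
exists y; split.
- apply/negP => /eqP ya; subst y.
  have := run_agents_inj yin ain erefl; case => E.
  by move: (pref_neq pa); rewrite E eqxx.
- apply/negP => /eqP yb; subst y.
  by move: (run_before yin ain lt); rewrite pb.
- apply: pref_total; first by rewrite eq_sym (pref_neq pa).
  exact: run_before yin ain lt.
Qed.

Lemma three_A a b c ha hb hc : (a, ha) \in run ->
  (forall y, [|| y == a, y == b | y == c]) ->
  prefers P a hb ha -> prefers P b hc hb -> prefers P c ha hc ->
  prefers P c hb ha.
Proof.
move=> ain all3 pa pb pc.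
have [y [yin lt]] := run_E1 ain pa.
case/or3P: (all3 y) => /eqP ?; subst y.
- have := run_agents_inj yin ain erefl; case => E.
  by move: (pref_neq pa); rewrite E eqxx.
- have [z [zin lt2]] := run_E1 yin pb.
  case/or3P: (all3 z) => /eqP ?; subst z.
  + have := run_agents_inj zin ain erefl; case => E.
    by move: (pref_neq pc); rewrite E eqxx.
  + have := run_agents_inj zin yin erefl; case => E.
    by move: (pref_neq pb); rewrite E eqxx.
  + by move: (run_before zin ain (ltn_trans lt2 lt)); rewrite pc.
- apply: pref_total; first by rewrite eq_sym (pref_neq pa).
  exact: run_before yin ain lt.
Qed.

Lemma three_B a b c ha hb hc : (a, ha) \in run ->
  (forall y, [|| y == a, y == b | y == c]) ->
  prefers P a hb ha -> prefers P c ha hc ->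
  prefers P a hc hb -> prefers P b ha hc -> False.
Proof.
move=> ain all3 pa pc pa' pb'.
have pac : prefers P a hc ha by exact: ltn_trans pa' pa.
have [y [yin lt]] := run_E1 ain pac.
case/or3P: (all3 y) => /eqP ?; subst y.
- have := run_agents_inj yin ain erefl; case => E.
  by move: (pref_neq pac); rewrite E eqxx.
- by move: (run_before yin ain lt); rewrite pb'.
- by move: (run_before yin ain lt); rewrite pc.
Qed.

End Comb.


Definition effp n (P : profile n) (s : {perm 'I_n}) :=
  forall t : {perm 'I_n}, (forall i, t i != s i -> prefers P i (t i) (s i)) -> t = s.

Definition inrun n (P : profile n) (pi : {perm 'I_n}) i h :=
  (i, h) \in sd_run P [seq pi k | k <- enum 'I_n] [::].

Lemma uniq_pi n (pi : {perm 'I_n}) : uniq [seq pi k | k <- enum 'I_n].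
Proof. by rewrite map_inj_uniq ?enum_uniq //; exact: perm_inj. Qed.

Lemma F2 n (Hn : (n <= 3)%N) (P : profile n) (s : {perm 'I_n}) :
  (forall i, exists pi, inrun P pi i (s i)) -> effp P s.
Proof.
move=> Hrun t Hdom; apply/permP => a; apply/eqP; apply/negPn/negP => Qa.
pose g := fun i => (s^-1)%g (t i).
have tg : forall i, t i = s (g i) by move=> i; rewrite /g permKV.
have cl : forall x, t x != s x -> t (g x) != s (g x) /\ g x != x.
  move=> x Qx; split.
    rewrite -tg; apply: contra Qx => /eqP /perm_inj E.
    by rewrite tg E.
  by apply: contra Qx => /eqP E; rewrite tg E.
case: (small_cycle Hn (Q := fun i => t i != s i) Qa cl).
- move=> [x [y [Qx Qy xy gx gy]]].
  have px := Hdom x Qx; have py := Hdom y Qy.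
  rewrite tg gx in px; rewrite tg gy in py.
  have [pi1 r1] := Hrun x; have [pi2 r2] := Hrun y.
  have [w [wx wy pw]] := two_step (uniq_pi pi1) r1 px py.
  have [w' [wy' wx' pw']] := two_step (uniq_pi pi2) r2 py px.
  have ww : w = w'.
    apply/eqP; apply/negPn/negP => ww.
    by apply: (four_distinct Hn (a:=x) (b:=y) (c:=w) (d:=w')); rewrite // eq_sym.
  by subst w'; move: (ltn_trans pw pw'); rewrite ltnn.
- move=> [x [y [z [[Qx [Qy Qz]] /and3P [xy xz yz] gx gy gz]]]].
  have px := Hdom x Qx; have py := Hdom y Qy; have pz := Hdom z Qz.
  rewrite tg gx in px; rewrite tg gy in py; rewrite tg gz in pz.
  have all3 : forall w, [|| w == x, w == y | w == z].
    move=> w; apply/negPn/negP; rewrite !negb_or => /and3P [wx wy wz].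
    by apply: (four_distinct Hn (a:=x) (b:=y) (c:=z) (d:=w)); rewrite // eq_sym.
  have all3y : forall w, [|| w == y, w == z | w == x].
    by move=> w; case/or3P: (all3 w) => ->; rewrite ?orbT.
  have all3z : forall w, [|| w == z, w == x | w == y].
    by move=> w; case/or3P: (all3 w) => ->; rewrite ?orbT.
  have [pi1 r1] := Hrun x; have [pi2 r2] := Hrun y; have [pi3 r3] := Hrun z.
  have qx := three_A (uniq_pi pi2) r2 all3y py pz px.
  have qy := three_A (uniq_pi pi3) r3 all3z pz px py.
  exact: (three_B (uniq_pi pi1) r1 all3 px pz qx qy).
Qed.

Lemma cycle_perm n (Hn : (n <= 3)%N) (Q : pred 'I_n) (g : 'I_n -> 'I_n) a :
  Q a -> (forall x, Q x -> Q (g x) /\ g x != x) ->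
  exists rho : {perm 'I_n},
    (forall i, rho i != i -> Q i /\ rho i = g i) /\ exists i, rho i != i.
Proof.
move=> Qa cl; case: (small_cycle Hn Qa cl).
- move=> [x [y [Qx Qy xy gx gy]]].
  exists (tperm x y); split; last by exists x; rewrite tpermL eq_sym.
  move=> i; have [->|ix] := eqVneq i x; first by rewrite tpermL.
  have [->|iy] := eqVneq i y; first by rewrite tpermR.
  by rewrite tpermD ?eqxx // eq_sym.
- move=> [x [y [z [[Qx [Qy Qz]] /and3P [xy xz yz] gx gy gz]]]].
  exists (tperm x y * tperm x z)%g; split; last first.
    by exists x; rewrite permM tpermL tpermD // eq_sym.
  move=> i; rewrite permM.
  have [->|ix] := eqVneq i x; first by rewrite tpermL tpermD // eq_sym.
  have [->|iy] := eqVneq i y; first by rewrite tpermR tpermL.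
  have [->|iz] := eqVneq i z; first by rewrite (@tpermD _ x y) // tpermR.
  by rewrite !tpermD ?eqxx // eq_sym.
Qed.

Lemma greedy_step n (Hn : (n <= 3)%N) (P : profile n) (s : {perm 'I_n}) :
  effp P s -> forall done : seq 'I_n, uniq done -> (size done < n)%N ->
  exists x, x \notin done /\ best_remaining P x (rev (map s done)) = Some (s x).
Proof.
move=> Heff done ud sd.
set T := rev (map s done).
case: (boolP [exists x, (x \notin done) && (best_remaining P x T == Some (s x))]).
  by case/existsP => x /andP [xd /eqP E]; exists x.
move/existsPn => H; exfalso.
have [a ad] : exists a, a \notin done.
  have [/existsP //|/existsPn A] := boolP [exists x, x \notin done].
  have : (size (enum 'I_n) <= size done)%N.
    by apply: uniq_leq_size; [exact: enum_uniq | move=> x _; move/negPn: (A x)].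
  by rewrite size_enum_ord leqNgt sd.
pose hx := fun x => odflt (s x) (best_remaining P x T).
have sT : forall x, x \notin done -> s x \notin T.
  by move=> x xd; rewrite mem_rev mem_map //; exact: perm_inj.
have brx : forall x, x \notin done -> best_remaining P x T = Some (hx x).
  move=> x xd; rewrite /hx; case E: (best_remaining P x T) => [h|] //.
  by move: (sT x xd); rewrite (br_none E).
have hxT : forall x, x \notin done -> hx x \notin T.
  by move=> x xd; case: (br_spec (brx x xd)).
have pref : forall x, x \notin done -> prefers P x (hx x) (s x).
  move=> x xd; have [_ Hb] := br_spec (brx x xd).
  apply: pref_total; last exact: Hb (sT x xd).
  move: (H x); rewrite xd /= (brx x xd); apply: contra => /eqP ->; done.
pose g := fun x => (s^-1)%g (hx x).
have sg : forall x, s (g x) = hx x by move=> x; rewrite /g permKV.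
have cl : forall x, x \notin done -> g x \notin done /\ g x != x.
  move=> x xd; split.
    apply: contra (hxT x xd) => gd; rewrite mem_rev -sg; exact: map_f.
  apply/eqP => E; move: (pref x xd); rewrite -sg E /prefers ltnn //.
have [rho [Hrho [i0 Hi0]]] := cycle_perm Hn (Q := fun x => x \notin done) ad cl.
have E := Heff (rho * s)%g.
have : (rho * s)%g = s.
  apply: E => i; rewrite permM => ne.
  have ne' : rho i != i by apply: contra ne => /eqP ->.
  have [Qi ->] := Hrho i ne'; rewrite sg; exact: pref.
move/permP => /(_ i0); rewrite permM => /perm_inj /eqP.
by rewrite (negbTE Hi0).
Qed.

Lemma greedy n (Hn : (n <= 3)%N) (P : profile n) (s : {perm 'I_n}) :
  effp P s -> forall m (done : seq 'I_n), uniq done -> size done + m = n ->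
  sd_run P done [::] = [seq (x, s x) | x <- done] ->
  exists ord : seq 'I_n, [/\ uniq ord, size ord = n &
    sd_run P ord [::] = [seq (x, s x) | x <- ord]].
Proof.
move=> Heff; elim=> [|m IH] done ud sz E.
  by exists done; rewrite addn0 in sz.
have lt : (size done < n)%N by move: sz; clear; lia.
have [x [xd br]] := greedy_step Hn Heff ud lt.
apply: (IH (done ++ [:: x])).
- by rewrite cat_uniq ud /= orbF xd.
- by rewrite size_cat /=; move: sz; clear; lia.
- rewrite sd_cat E map_cat cats0 -map_comp /=.
  have -> : [seq (snd \o (fun x0 => (x0, s x0))) i | i <- done] = map s done by [].
  by rewrite br.
Qed.

Lemma list_perm n (ord : seq 'I_n) : uniq ord -> size ord = n ->
  exists pi : {perm 'I_n}, [seq pi k | k <- enum 'I_n] = ord.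
Proof.
case: ord => [|o0 ord'] u sz.
  by exists 1%g; move: sz => /= sz; subst n; rewrite enum_ord0.
set ord := o0 :: ord' in u sz *.
pose f := fun k : 'I_n => nth o0 ord k.
have finj : injective f.
  move=> k1 k2; rewrite /f => /eqP; rewrite nth_uniq ?sz ?ltn_ord //.
  by move/eqP/val_inj.
exists (perm finj).
apply: (@eq_from_nth _ o0); first by rewrite size_map size_enum_ord sz.
move=> i; rewrite size_map size_enum_ord => ilt.
rewrite (nth_map o0) ?size_enum_ord // permE /f.
by rewrite nth_enum_ord.
Qed.

Lemma F1 n (Hn : (n <= 3)%N) (P : profile n) (s : {perm 'I_n}) :
  effp P s -> forall i, exists pi, inrun P pi i (s i).
Proof.
move=> Heff i.
have [ord [u sz E]] := greedy Hn Heff (m := n) (done := [::]) isT erefl erefl.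
have [pi Epi] := list_perm u sz.
exists pi; rewrite /inrun Epi E.
apply: (map_f (fun x => (x, s x))).
apply/negPn/negP => io.
have : (size (i :: ord) <= size (enum 'I_n))%N.
  by apply: uniq_leq_size; [rewrite /= io u | move=> z _; rewrite mem_enum].
by rewrite /= size_enum_ord sz ltnn.
Qed.

Import Order.TTheory.
Local Open Scope ring_scope.

Section Bridge.
Variable R : realFieldType.
Variable n : nat.

Definition pmx (s : {perm 'I_n}) : 'M[R]_n := \matrix_(i, h) ((s i == h)%:R).

Lemma natb_eq1 (b : bool) : (b%:R : R) = 1 -> b.
Proof. by case: b => // /eqP; rewrite eq_sym oner_eq0. Qed.

Lemma pmx1 s i h : pmx s i h = 1 -> s i = h.
Proof. by rewrite mxE => /natb_eq1 /eqP. Qed.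

Lemma pmx_det s : deterministic (pmx s).
Proof.
split; last by move=> i h; rewrite mxE; case: (s i == h); [right|left].
split.
- by move=> i h; rewrite mxE ler0n.
- move=> i; rewrite (bigD1 (s i)) //= mxE eqxx big1 ?addr0 // => h hne.
  by rewrite mxE eq_sym (negbTE hne).
- move=> h; rewrite (bigD1 ((s^-1)%g h)) //= mxE permKV eqxx big1 ?addr0 //.
  move=> i ine; rewrite mxE; case: eqP => // E.
  by move: ine; rewrite -E permK eqxx.
Qed.

Lemma two_ones (F : 'I_n -> R) a b : (forall i, 0 <= F i) -> \sum_i F i = 1 ->
  F a = 1 -> F b = 1 -> a = b.
Proof.
move=> F0 S Fa Fb; apply/eqP; apply/negPn/negP => ab.
move: S; rewrite (bigD1 a) //= (bigD1 b) /=; last by rewrite eq_sym.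
have : 0 <= \sum_(i | (i != a) && (i != b)) F i by apply: sumr_ge0.
rewrite Fa Fb; lra.
Qed.

Lemma det_pmx (M : 'M[R]_n) : deterministic M -> exists s, M = pmx s.
Proof.
move=> [[M0 Mr Mc] M01].
have ex1 : forall i, exists h, M i h = 1.
  move=> i; have [/existsP [h /eqP E]|/existsPn H] := boolP [exists h, M i h == 1].
    by exists h.
  have : \sum_h M i h = 0.
    by apply: big1 => h _; case: (M01 i h) => // E; move: (H h); rewrite E eqxx.
  by rewrite Mr => /eqP; rewrite oner_eq0.
pose f := fun i => odflt i [pick h | M i h == 1].
have Mf : forall i, M i (f i) = 1.
  move=> i; rewrite /f; case: pickP => [h /eqP //|H].
  by have [h E] := ex1 i; move: (H h); rewrite E eqxx.
have finj : injective f.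
  move=> i j E; apply: (@two_ones (fun k => M k (f i))).
  - by move=> k; exact: M0.
  - exact: Mc.
  - exact: Mf.
  - by rewrite /= E; exact: Mf.
exists (perm finj); apply/matrixP => i h; rewrite !mxE permE.
have [<-|ne] := eqVneq (f i) h; first by rewrite Mf.
case: (M01 i h) => // E; exfalso.
by move/eqP: ne; apply; apply: (@two_ones (M i)).
Qed.

Lemma pmx_inj s t : pmx s = pmx t -> s = t.
Proof.
move=> E; apply/permP => i; apply: pmx1.
by rewrite E mxE eqxx.
Qed.

Lemma eff_to_effp (P : profile n) s : efficient_at P (pmx s) -> effp P s.
Proof.
move=> [_ H] t Hdom; apply/eqP; apply/negPn/negP => ts; apply: H.
exists (pmx t); split; first exact: pmx_det.
  by move/pmx_inj => E; move: ts; rewrite E eqxx.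
move=> i h h' hh' /pmx1 th' /pmx1 sh; subst h h'.
by apply: Hdom; rewrite eq_sym.
Qed.

Lemma effp_to_eff (P : profile n) s : effp P s -> efficient_at P (pmx s).
Proof.
move=> H; split; first exact: pmx_det.
move=> [M' [dM' ne cond]].
have [t Et] := det_pmx dM'; subst M'.
apply: ne; congr pmx; apply: H => i ne.
apply: cond; first by rewrite eq_sym.
- by rewrite mxE eqxx.
- by rewrite mxE eqxx.
Qed.

Lemma RSD0 (P : profile n) i h :
  RSD R P i h = 0 <-> forall pi, ~~ inrun P pi i h.
Proof.
rewrite /RSD mxE summxE.
have nf : (n`!%:R : R) != 0 by rewrite pnatr_eq0 -lt0n fact_gt0.
split.
- move/eqP; rewrite mulf_eq0 invr_eq0 (negbTE nf) /= => /eqP S pi.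
  have H0 : forall pi', true -> 0 <= SD R pi' P i h.
    by move=> pi' _; rewrite mxE ler0n.
  have := psumr_eq0P H0 S (i := pi) isT.
  by rewrite mxE /inrun; case: (_ \in _) => //= /eqP; rewrite oner_eq0.
- move=> H; rewrite big1 ?mulr0 // => pi _.
  by rewrite mxE; move: (H pi); rewrite /inrun => /negbTE ->.
Qed.

End Bridge.


Section Birk.
Variable R : realFieldType.

Lemma real3 (c a00 a01 a02 a10 a11 a12 a20 a21 a22 : R) :
  0 < c -> 0 <= a00 -> 0 <= a01 -> 0 <= a02 -> 0 <= a10 -> 0 <= a11 -> 0 <= a12 ->
  0 <= a20 -> 0 <= a21 -> 0 <= a22 ->
  a00 + a01 + a02 = c -> a10 + a11 + a12 = c -> a20 + a21 + a22 = c ->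
  a00 + a10 + a20 = c -> a01 + a11 + a21 = c -> a02 + a12 + a22 = c ->
  (0 < a00 /\ 0 < a11 /\ 0 < a22) \/ (0 < a00 /\ 0 < a12 /\ 0 < a21) \/
  (0 < a01 /\ 0 < a10 /\ 0 < a22) \/ (0 < a01 /\ 0 < a12 /\ 0 < a20) \/
  (0 < a02 /\ 0 < a10 /\ 0 < a21) \/ (0 < a02 /\ 0 < a11 /\ 0 < a20).
Proof. move=> *; lra. Qed.

Lemma real2 (c a00 a01 a10 a11 : R) :
  0 < c -> 0 <= a00 -> 0 <= a01 -> 0 <= a10 -> 0 <= a11 ->
  a00 + a01 = c -> a10 + a11 = c -> a00 + a10 = c -> a01 + a11 = c ->
  (0 < a00 /\ 0 < a11) \/ (0 < a01 /\ 0 < a10).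
Proof. move=> *; lra. Qed.

Definition o30 : 'I_3 := @Ordinal 3 0 isT.
Definition o31 : 'I_3 := @Ordinal 3 1 isT.
Definition o32 : 'I_3 := @Ordinal 3 2 isT.
Definition o20 : 'I_2 := @Ordinal 2 0 isT.
Definition o21 : 'I_2 := @Ordinal 2 1 isT.

Lemma sum3 (F : 'I_3 -> R) : \sum_i F i = F o30 + F o31 + F o32.
Proof.
rewrite !big_ord_recl big_ord0 addr0 addrA.
by congr (F _ + F _ + F _); apply: val_inj.
Qed.

Lemma sum2 (F : 'I_2 -> R) : \sum_i F i = F o20 + F o21.
Proof.
rewrite !big_ord_recl big_ord0 addr0.
by congr (F _ + F _); apply: val_inj.
Qed.

Lemma ord3_cases (i : 'I_3) : [\/ i = o30, i = o31 | i = o32].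
Proof.
case: i => [[|[|[|k]]] Hk] //.
- by apply: Or31; apply: val_inj.
- by apply: Or32; apply: val_inj.
- by apply: Or33; apply: val_inj.
Qed.

Lemma ord2_cases (i : 'I_2) : i = o20 \/ i = o21.
Proof.
case: i => [[|[|k]] Hk] //.
- by left; apply: val_inj.
- by right; apply: val_inj.
Qed.

Lemma mk3 (a b c : 'I_3) : a != b -> a != c -> b != c ->
  exists s : {perm 'I_3}, [/\ s o30 = a, s o31 = b & s o32 = c].
Proof.
move=> ab ac bc.
pose f := fun i : 'I_3 => if i == o30 then a else if i == o31 then b else c.
have finj : injective f.
  move=> i j; rewrite /f.
  by case: (ord3_cases i) => ->; case: (ord3_cases j) => -> //=;
    move/eqP; rewrite ?(negbTE ab) ?(negbTE ac) ?(negbTE bc)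
      ?(eq_sym b a) ?(eq_sym c a) ?(eq_sym c b) ?(negbTE ab) ?(negbTE ac) ?(negbTE bc).
by exists (perm finj); rewrite !permE.
Qed.


Lemma diag3 (M : 'M[R]_3) a b c : a != b -> a != c -> b != c ->
  0 < M o30 a -> 0 < M o31 b -> 0 < M o32 c ->
  exists s : {perm 'I_3}, forall i, 0 < M i (s i).
Proof.
move=> ab ac bc pa pb pc; have [s [sa sb sc]] := mk3 ab ac bc.
by exists s => i; case: (ord3_cases i) => ->; rewrite ?sa ?sb ?sc.
Qed.

Lemma pos_diag n (Hn : (n <= 3)%N) (M : 'M[R]_n) c : 0 < c ->
  (forall i j, 0 <= M i j) -> (forall i, \sum_j M i j = c) ->
  (forall j, \sum_i M i j = c) ->
  exists s : {perm 'I_n}, forall i, 0 < M i (s i).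
Proof.
case: n Hn M => [|[|[|[|n]]]] // _ M c0 M0 Mr Mc.
- by exists 1%g => -[m lt].
- exists 1%g => i; rewrite perm1 (ord1 i).
  by have := Mr ord0; rewrite big_ord1 => ->.
- have r0 := Mr o20; have r1 := Mr o21; have k0 := Mc o20; have k1 := Mc o21.
  move: r0 r1 k0 k1; rewrite !sum2 => r0 r1 k0 k1.
  case: (real2 c0 (M0 o20 o20) (M0 o20 o21) (M0 o21 o20) (M0 o21 o21) r0 r1 k0 k1).
  + by move=> [p q]; exists 1%g => i; rewrite perm1; case: (ord2_cases i) => ->.
  + move=> [p q]; exists (tperm o20 o21) => i.
    by case: (ord2_cases i) => ->; rewrite ?tpermL ?tpermR.
- have r0 := Mr o30; have r1 := Mr o31; have r2 := Mr o32.
  have k0 := Mc o30; have k1 := Mc o31; have k2 := Mc o32.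
  move: r0 r1 r2 k0 k1 k2; rewrite !sum3 => r0 r1 r2 k0 k1 k2.
  case: (real3 c0 (M0 o30 o30) (M0 o30 o31) (M0 o30 o32) (M0 o31 o30) (M0 o31 o31)
    (M0 o31 o32) (M0 o32 o30) (M0 o32 o31) (M0 o32 o32) r0 r1 r2 k0 k1 k2)
    => [[p [q r]]|[[p [q r]]|[[p [q r]]|[[p [q r]]|[[p [q r]]|[p [q r]]]]]]];
    exact: diag3 p q r.
Qed.


Lemma pmx_row n (s : {perm 'I_n}) i : \sum_h pmx R s i h = 1.
Proof. by have [[_ H _] _] := pmx_det R s. Qed.

Lemma pmx_col n (s : {perm 'I_n}) h : \sum_i pmx R s i h = 1.
Proof. by have [[_ _ H] _] := pmx_det R s. Qed.

Lemma pmx_ge0 n (s : {perm 'I_n}) i h : 0 <= pmx R s i h.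
Proof. by rewrite mxE ler0n. Qed.

Lemma entry_le_sum n (F : 'I_n -> R) j : (forall i, 0 <= F i) -> F j <= \sum_i F i.
Proof.
move=> F0; rewrite (bigD1 j) //= lerDl; exact: sumr_ge0.
Qed.

Definition posM n (M : 'M[R]_n) := [pred p : 'I_n * 'I_n | 0 < M p.1 p.2].

Lemma birk n (Hn : (n <= 3)%N) (n0 : (0 < n)%N) : forall k (M : 'M[R]_n) c,
  (#|posM M| <= k)%N -> 0 <= c -> (forall i j, 0 <= M i j) ->
  (forall i, \sum_j M i j = c) -> (forall j, \sum_i M i j = c) ->
  exists s : seq (R * {perm 'I_n}),
    [/\ forall p, p \in s -> 0 <= p.1, \sum_(p <- s) p.1 = c,
        forall p, p \in s -> forall i, 0 < M i (p.2 i)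
      & M = \sum_(p <- s) p.1 *: pmx R p.2].
Proof.
pose i0 : 'I_n := Ordinal n0.
elim=> [|k IH] M c Hk c0 M0 Mr Mc.
  have M00 : forall i j, M i j = 0.
    move=> i j; apply/eqP; rewrite eq_le M0 andbT leNgt; apply/negP => pos.
    by move: Hk; rewrite leqn0 => /eqP /card0_eq /(_ (i, j)); rewrite inE pos.
  have cz : c = 0 by rewrite -(Mr i0); apply: big1 => j _.
  exists [::]; split => //; first by rewrite big_nil.
  by rewrite big_nil; apply/matrixP => i j; rewrite M00 mxE.
have [cz|cpos] := eqVneq c 0.
  have M00 : forall i j, M i j = 0.
    move=> i j; apply/eqP; rewrite eq_le M0 andbT -cz -(Mr i).
    exact: entry_le_sum.
  exists [::]; split => //; first by rewrite big_nil.
  by rewrite big_nil; apply/matrixP => i j; rewrite M00 mxE.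
have cgt : 0 < c by rewrite lt_def cpos c0.
have [s Hs] := pos_diag Hn cgt M0 Mr Mc.
case: (@arg_minP _ _ _ i0 predT (fun i => M i (s i)) isT) => j _ Hj.
set lam := M j (s j).
have lam0 : 0 < lam by apply: Hs.
have lamc : lam <= c by rewrite -(Mr j); exact: entry_le_sum.
pose M' := M - lam *: pmx R s.
have M'E : forall i h, M' i h = M i h - lam * pmx R s i h by move=> i h; rewrite !mxE.
have M'le : forall i h, M' i h <= M i h.
  move=> i h; rewrite M'E lerBlDr lerDl; apply: mulr_ge0; [exact: ltW|exact: pmx_ge0].
have M'0 : forall i h, 0 <= M' i h.
  move=> i h; rewrite M'E mxE; have [<-|ne] := eqVneq (s i) h.
    by rewrite mulr1 subr_ge0; apply: Hj.
  by rewrite mulr0 subr0.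
have M'r : forall i, \sum_h M' i h = c - lam.
  by move=> i; under eq_bigr do rewrite M'E; rewrite sumrB -mulr_sumr pmx_row mulr1 Mr.
have M'c : forall h, \sum_i M' i h = c - lam.
  by move=> h; under eq_bigr do rewrite M'E; rewrite sumrB -mulr_sumr pmx_col mulr1 Mc.
have card : (#|posM M'| < #|posM M|)%N.
  apply: proper_card; apply/properP; split.
    apply/subsetP => -[i h]; rewrite !inE /= => p; exact: lt_le_trans p (M'le i h).
  exists (j, s j); rewrite !inE /=; first exact: lam0.
  by rewrite M'E mxE eqxx mulr1 subrr ltxx.
have Hk' : (#|posM M'| <= k)%N by rewrite -ltnS; exact: leq_trans card Hk.
have cl0 : 0 <= c - lam by rewrite subr_ge0.
have [s' [w' sum' sup' E']] := IH M' (c - lam) Hk' cl0 M'0 M'r M'c.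
exists ((lam, s) :: s'); split.
- move=> p; rewrite in_cons => /orP [/eqP -> /=|]; [exact: ltW | exact: w'].
- by rewrite big_cons sum' /= addrC subrK.
- move=> p; rewrite in_cons => /orP [/eqP -> /=|ps i]; first exact: Hs.
  exact: lt_le_trans (sup' p ps i) (M'le _ _).
- by rewrite big_cons -E' /M' /= addrC subrK.
Qed.

End Birk.


Theorem mainTheorem1 (R : realFieldType) (n : nat) (f : profile n -> 'M[R]_n) :
  (n <= 3)%N ->
  (forall P, bistochastic (f P)) ->
  (support_efficient f <-> ex_post_efficient f).
Proof.
move=> Hn Hb; split.
- move=> Hse P; have [M0 Mr Mc] := Hb P.
  have [n0|n0] := boolP (0 < n)%N; last first.
    have no : forall i : 'I_n, False.
      by move=> i; move: (ltn_ord i) n0; clear; lia.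
    exists [:: (1, pmx R 1%g)]; split.
    + by move=> p; rewrite inE => /eqP -> /=; exact: ler01.
    + by rewrite big_cons big_nil addr0.
    + move=> p; rewrite inE => /eqP -> /=; apply: effp_to_eff; apply: F2 => //.
    + apply/matrixP => i j; case: (no i).
  have [s [w sw sup E]] := birk Hn n0 (leqnn #|posM (f P)|) ler01 M0 Mr Mc.
  exists [seq (p.1, pmx R p.2) | p <- s]; split.
  + by move=> p /mapP [q qs ->] /=; exact: w.
  + by rewrite big_map.
  + move=> p /mapP [q qs ->] /=; apply: effp_to_eff; apply: F2 => // i.
    have [/existsP //|/existsPn H] := boolP [exists pi, inrun P pi i (q.2 i)].
    exfalso; have : RSD R P i (q.2 i) = 0 by apply/RSD0.
    move/Hse => E0; move: (sup q qs i); rewrite E0 ltxx //.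
  + by rewrite big_map.
- move=> Hep P i h /RSD0 Hno.
  have [s [w sw eff E]] := Hep P.
  rewrite E summxE; apply: big1_seq => p /andP [_ ps].
  rewrite mxE; have [dp _] := eff p ps.
  have [sg Esg] := det_pmx dp.
  have := eff p ps; rewrite Esg => /eff_to_effp Heff.
  have [pi Hpi] := F1 Hn Heff i.
  rewrite mxE; have [sh|ne] := eqVneq (sg i) h.
    by move: (Hno pi); rewrite -sh Hpi.
  by rewrite mulr0.
Qed.
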